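(* Let $M$ be an $N\times N$ and $N_0$ an $r\times N$ complex matrix. Then $I-\widetilde M$ is invertible, and if the series $\sum_{m=0}^\infty N_0M^m$ converges, then $\sum_{m=0}^\infty N_0M^m=N_0(I-\widetilde M)^{-1}$.
   Context: For a square complex matrix $M$ with Jordan decomposition $M=SJS^{-1}$, where $S$ is nonsingular and $J=\mathrm{diag}(J_{n_1}(\lambda_1),\dots,J_{n_k}(\lambda_k))$ with $J_{n_i}(\lambda_i)$ the $n_i\times n_i$ Jordan block for eigenvalue $\lambda_i$, define $\widetilde M=S\widetilde JS^{-1}$, where $\widetilde J=\mathrm{diag}(J^1,\dots,J^k)$ with $J^i=0_{n_i\times n_i}$ if $|\lambda_i|\ge1$ and $J^i=J_{n_i}(\lambda_i)$ otherwise. $I$ is the identity matrix. *)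

(* Defs.v *)
From HB Require Import structures.
From mathcomp Require Import all_boot all_order all_algebra.
Set Implicit Arguments. Unset Strict Implicit. Unset Printing Implicit Defensive.
Import Order.TTheory GRing.Theory Num.Theory.
Local Open Scope ring_scope.

Definition jordan_block (C : numClosedFieldType) (n : nat) (lam : C) : 'M[C]_n :=
  \matrix_(i < n, j < n) (lam *+ (i == j :> nat) + (j == i.+1 :> nat)%:R).

Definition jordan_mx (C : numClosedFieldType) (k : nat) (ns : 'I_k -> nat)
  (lam : 'I_k -> C) : 'M[C]_(\sum_i ns i) :=
  @mxdiag C k ns (fun i => jordan_block (ns i) (lam i)).

Definition jordan_tilde_mx (C : numClosedFieldType) (k : nat) (ns : 'I_k -> nat)
  (lam : 'I_k -> C) : 'M[C]_(\sum_i ns i) :=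
  @mxdiag C k ns (fun i => if 1 <= `|lam i| then 0 else jordan_block (ns i) (lam i)).

Definition mx_series_to (C : numClosedFieldType) (p q : nat)
  (F : nat -> 'M[C]_(p, q)) (L : 'M[C]_(p, q)) : Prop :=
  forall eps : C, 0 < eps -> exists K : nat, forall n : nat, (K <= n)%N ->
    forall i j, `|(\sum_(m < n) F m) i j - L i j| < eps.

(* Main.v *)
Require Import Defs.
From HB Require Import structures.
From mathcomp Require Import all_boot all_order all_algebra zify.
Import Order.TTheory GRing.Theory Num.Theory.
Set Implicit Arguments. Unset Strict Implicit. Unset Printing Implicit Defensive.
Local Open Scope ring_scope.
Local Open Scope ring_scope.

Section Cvg.
Variable C : numClosedFieldType.

Definition cvg0 p q (F : nat -> 'M[C]_(p, q)) : Prop :=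
  forall eps : C, 0 < eps -> exists K : nat, forall n : nat, (K <= n)%N ->
    forall i j, `|F n i j| < eps.

Lemma cvg0_ext p q (F G : nat -> 'M[C]_(p, q)) :
  (forall n, F n = G n) -> cvg0 F -> cvg0 G.
Proof. by move=> e H eps /H [K HK]; exists K => n /HK; rewrite e. Qed.

Lemma cvg0_add p q (F G : nat -> 'M[C]_(p, q)) :
  cvg0 F -> cvg0 G -> cvg0 (fun n => F n + G n).
Proof.
move=> HF HG eps e0.
have e2 : 0 < eps / 2 by rewrite divr_gt0 // ltr0n.
have [K1 H1] := HF _ e2; have [K2 H2] := HG _ e2.
exists (maxn K1 K2) => n Hn i j; rewrite mxE (splitr eps).
apply: le_lt_trans (ler_normD _ _) _.
apply: ltrD; [apply: H1 | apply: H2]; apply: leq_trans Hn;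
  by rewrite ?leq_maxl ?leq_maxr.
Qed.

Lemma cvg0_opp p q (F : nat -> 'M[C]_(p, q)) :
  cvg0 F -> cvg0 (fun n => - F n).
Proof. by move=> H eps /H [K HK]; exists K => n /HK Hn i j; rewrite mxE normrN. Qed.

Lemma cvg0_shift p q (F : nat -> 'M[C]_(p, q)) :
  cvg0 F -> cvg0 (fun n => F n.+1).
Proof. by move=> H eps /H [K HK]; exists K => n Hn; apply: HK; apply: leqW. Qed.

Lemma cvg0_const p q (X : 'M[C]_(p, q)) : cvg0 (fun _ => X) -> X = 0.
Proof.
move=> H; apply/matrixP => i j; rewrite mxE.
case: (X i j =P 0) => // /eqP ne.
have [K HK] := H `|X i j| (ltac:(by rewrite normr_gt0)).
by have := HK K (leqnn K) i j; rewrite ltxx.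
Qed.

Lemma cvg0_mulr p q s (F : nat -> 'M[C]_(p, q)) (B : 'M[C]_(q, s)) :
  cvg0 F -> cvg0 (fun n => F n *m B).
Proof.
move=> H eps e0.
set c := \sum_k \sum_j `|B k j|.
have c0 : 0 <= c by apply: sumr_ge0 => k _; apply: sumr_ge0 => j _.
have c1 : 0 < c + 1 by apply: ltr_wpDl.
have e' : 0 < eps / (c + 1) by rewrite divr_gt0.
have [K HK] := H _ e'.
exists K => n Hn i j; rewrite mxE.
apply: le_lt_trans (ler_norm_sum _ _ _) _.
apply: (@le_lt_trans _ _ (\sum_k eps / (c + 1) * `|B k j|)).
  apply: ler_sum => k _; rewrite normrM; apply: ler_wpM2r => //.
  exact: ltW (HK n Hn i k).
rewrite -mulr_sumr.
apply: (@le_lt_trans _ _ (eps / (c + 1) * c)).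
  apply: ler_wpM2l; first exact: ltW.
  rewrite /c; apply: ler_sum => k _.
  rewrite (bigD1 j) //= lerDl; apply: sumr_ge0 => l _; exact: normr_ge0.
rewrite mulrAC ltr_pdivrMr // ltr_pM2l //.
by rewrite ltrDl ltr01.
Qed.

Lemma series_cvg0 p q (F : nat -> 'M[C]_(p, q)) L :
  mx_series_to F L -> cvg0 F.
Proof.
move=> H.
have H1 : cvg0 (fun n => \sum_(m < n) F m - L).
  by move=> eps /H [K HK]; exists K => n /HK Hn i j; rewrite !mxE.
apply: (cvg0_ext _ (cvg0_add (cvg0_shift H1) (cvg0_opp H1))) => n.
by rewrite big_ord_recr /= opprB addrA subrK addrAC subrr add0r.
Qed.

Lemma jb_pow (n : nat) (lam : C) (m : nat) (a b : 'I_n) :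
  ((b < a)%N -> (jordan_block n lam ^+ m) a b = 0) /\
  (jordan_block n lam ^+ m) a a = lam ^+ m.
Proof.
elim: m a b => [|m IH] a b.
  rewrite !expr0 !mxE eqxx; split => // h.
  by rewrite (_ : (a == b) = false) //; apply/eqP => e; rewrite e ltnn in h.
rewrite exprSr -mulmxE; split.
  move=> hba; rewrite mxE big1 // => c _.
  case: (ltnP c a) => hc; first by rewrite (proj1 (IH a c)) ?mul0r.
  rewrite [jordan_block _ _ c b]mxE.
  have e1 : (c == b :> nat) = false by lia.
  have e2 : (b == c.+1 :> nat) = false by lia.
  by rewrite e1 e2 mulr0n add0r mulr0.
rewrite mxE (bigD1 a) //= big1 ?addr0.
  rewrite (proj2 (IH a a)) [jordan_block _ _ a a]mxE eqxx.
  have e2 : (a == a.+1 :> nat) = false by lia.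
  by rewrite e2 addr0 mulr1n exprSr.
move=> c hc; case: (ltnP c a) => hca; first by rewrite (proj1 (IH a c)) ?mul0r.
rewrite [jordan_block _ _ c a]mxE.
have hc' : (c != a :> nat) by [].
have e1 : (c == a :> nat) = false by lia.
have e2 : (a == c.+1 :> nat) = false by lia.
by rewrite e1 e2 mulr0n add0r mulr0.
Qed.

Lemma jb_kill r n (lam : C) (Q : 'M[C]_(r, n)) :
  1 <= `|lam| -> cvg0 (fun m => Q *m jordan_block n lam ^+ m) -> Q = 0.
Proof.
move=> hl H; apply/matrixP => s j; rewrite [RHS]mxE.
suff: forall k (j : 'I_n), (j < k)%N -> Q s j = 0 by apply; apply: ltnSn.
elim=> [|k IH] {}j hj; first by [].
case: (ltnP j k) => [/IH //|hkj].
have H2 : forall m, (Q *m jordan_block n lam ^+ m) s j = Q s j * lam ^+ m.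
  move=> m; rewrite mxE (bigD1 j) //= big1 ?addr0; first by rewrite (proj2 (jb_pow _ _ _ j)).
  move=> c hc; case: (ltnP c j) => hcj.
    by rewrite IH ?mul0r //; lia.
  have hc' : (c != j :> nat) by [].
  by rewrite (proj1 (jb_pow _ _ _ _)) ?mulr0 //; lia.
case: (Q s j =P 0) => // /eqP ne.
have [K HK] := H `|Q s j| (ltac:(by rewrite normr_gt0)).
have := HK K (leqnn K) s j; rewrite H2 normrM normrX.
have : `|Q s j| <= `|Q s j| * `|lam| ^+ K by apply: ler_peMr => //; exact: exprn_ege1.
by move=> h1 h2; move: (le_lt_trans h1 h2); rewrite ltxx.
Qed.


Lemma mxdiag_mul k (ns : 'I_k -> nat) (A B : forall i, 'M[C]_(ns i)) :
  mxdiag A *m mxdiag B = mxdiag (fun i => A i *m B i).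
Proof.
rewrite {2}/mxdiag mul_mxdiag_mxblock /mxdiag; apply/eq_mxblockP => i j.
by case: eqP => [<- | _]; rewrite ?conform_mx_id ?mulmx0.
Qed.

Lemma mxdiag_exp k (ns : 'I_k -> nat) (A : forall i, 'M[C]_(ns i)) m :
  mxdiag A ^+ m = mxdiag (fun i => A i ^+ m).
Proof.
elim: m => [|m IH].
  rewrite expr0; under eq_mxdiag do rewrite expr0.
  by rewrite (mxdiagZ 1).
rewrite exprSr -mulmxE IH mxdiag_mul; apply/eq_mxdiag => i.
by rewrite exprSr mulmxE.
Qed.

Lemma mul_mxdiag_row k (ns : 'I_k -> nat) r (P : 'M[C]_(r, \sum_i ns i))
  (D : forall i, 'M[C]_(ns i)) :
  P *m mxdiag D = \mxrow_i (submxrow P i *m D i).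
Proof. by rewrite -{1}(submxrowK P) mul_mxrow_mxdiag. Qed.

Lemma cvg0_submxrow k (ns : 'I_k -> nat) r (F : nat -> 'M[C]_(r, \sum_i ns i)) i :
  cvg0 F -> cvg0 (fun m => submxrow (F m) i).
Proof. by move=> H eps /H [K HK]; exists K => n /HK Hn a b; rewrite mxE. Qed.

Lemma jb_unit n (lam : C) : `|lam| < 1 -> (1%:M - jordan_block n lam) \in unitmx.
Proof.
move=> hl; rewrite unitmxE -det_tr det_trig.
  rewrite unitfE; apply/prodf_neq0 => a _; rewrite !mxE eqxx.
  have e2 : (a == a.+1 :> nat) = false by lia.
  rewrite e2 !eqxx /= mulr1n addr0 subr_eq0; apply/eqP => e.
  have el : lam = 1 by rewrite e mulr1n.
  by move: hl; rewrite el normr1 ltxx.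
apply/forallP => a; apply/forallP => b; apply/implyP => hab.
rewrite !mxE.
have e1 : (b == a :> nat) = false by lia.
have e2 : (a == b.+1 :> nat) = false by lia.
have e0 : (b == a) = false := e1.
by rewrite e0 e1 e2 /= !mulr0n addr0 subr0.
Qed.

End Cvg.

Theorem corollaryA1 (C : numClosedFieldType) (N r : nat)
  (M : 'M[C]_N) (N0 : 'M[C]_(r, N))
  (k : nat) (ns : 'I_k -> nat) (lam : 'I_k -> C)
  (Hns : forall i, (0 < ns i)%N) (E : (\sum_i ns i)%N = N)
  (S : 'M[C]_N) (HS : S \in unitmx)
  (HM : M = S *m castmx (E, E) (jordan_mx ns lam) *m invmx S) :
  let Mt := S *m castmx (E, E) (jordan_tilde_mx ns lam) *m invmx S in
  (1%:M - Mt) \in unitmx /\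
  (forall L : 'M[C]_(r, N), mx_series_to (fun m => N0 *m M ^+ m) L ->
     L = N0 *m invmx (1%:M - Mt)).
Proof.
subst N; rewrite !castmx_id => Mt.
set Jb := fun i => jordan_block (ns i) (lam i).
set Bt := fun i => if 1 <= `|lam i| then 0 else Jb i.
have eJ : jordan_mx ns lam = mxdiag Jb by [].
have eJt : jordan_tilde_mx ns lam = mxdiag Bt by [].
rewrite eJ in HM; rewrite /Mt eJt; clear Mt eJ eJt.
set J := mxdiag Jb in HM *; set Jt := mxdiag Bt.
have HUt : (1%:M - Jt) \in unitmx.
  have e1 : 1%:M - Jt = mxdiag (fun i => 1%:M - Bt i) by rewrite mxdiagB mxdiagZ.
  have hb : forall i, (1%:M - Bt i) \in unitmx.
    move=> i; rewrite /Bt; case: ifP => h; first by rewrite subr0 unitmx1.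
    by apply: jb_unit; rewrite real_ltNge ?normr_real ?real1 ?h.
  have := @mulmx1_unit _ _ (1%:M - Jt) (mxdiag (fun i => invmx (1%:M - Bt i))).
  case => //; rewrite e1 mxdiag_mul.
  under eq_mxdiag do rewrite mulmxV ?hb //.
  exact: mxdiagZ.
have eU : 1%:M - S *m Jt *m invmx S = S *m (1%:M - Jt) *m invmx S.
  by rewrite mulmxBr mulmxBl mulmx1 mulmxV.
have HU : (1%:M - S *m Jt *m invmx S) \in unitmx.
  by rewrite eU !unitmx_mul HS HUt unitmx_inv HS.
split => // L Hser.
have HMp : forall m, M ^+ m = S *m J ^+ m *m invmx S.
  elim=> [|m IH]; first by rewrite !expr0 mulmx1 mulmxV.
  rewrite exprSr -mulmxE IH HM exprSr -mulmxE.
  by rewrite !mulmxA -[_ *m invmx S *m S]mulmxA mulVmx // mulmx1.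
set P := N0 *m S.
have HP : cvg0 (fun m => P *m J ^+ m).
  apply: cvg0_ext (cvg0_mulr S (series_cvg0 Hser)) => m.
  by rewrite HMp !mulmxA -mulmxA mulVmx // mulmx1 /P.
have HPb : forall m, P *m J ^+ m = \mxrow_i (submxrow P i *m Jb i ^+ m).
  by move=> m; rewrite /J mxdiag_exp mul_mxdiag_row.
have Hz : forall i, 1 <= `|lam i| -> submxrow P i = 0.
  move=> i hi; apply: (jb_kill hi).
  apply: cvg0_ext (cvg0_submxrow i HP) => m.
  by rewrite HPb mxrowK.
have HPJ : forall m, P *m J ^+ m = P *m Jt ^+ m.
  move=> m; rewrite HPb /Jt mxdiag_exp mul_mxdiag_row; apply/eq_mxrow => i.
  rewrite /Bt; case: ifP => h //; by rewrite Hz // !mul0mx.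
have Htel : forall n, (\sum_(m < n) N0 *m M ^+ m) *m (S *m (1%:M - Jt)) = P - P *m J ^+ n.
  move=> n; rewrite HPJ; elim: n => [|n IH].
    by rewrite big_ord0 mul0mx expr0 mulmx1 subrr.
  rewrite big_ord_recr /= mulmxDl IH HMp.
  rewrite (_ : N0 *m (S *m J ^+ n *m invmx S) *m (S *m (1%:M - Jt)) = P *m Jt ^+ n *m (1%:M - Jt)).
    rewrite mulmxBr mulmx1 exprSr -mulmxE mulmxA.
    by rewrite addrA subrK.
  by rewrite -HPJ !mulmxA -[_ *m invmx S *m S]mulmxA mulVmx // mulmx1 /P ?mulmxA.
have H1 : cvg0 (fun n => \sum_(m < n) N0 *m M ^+ m - L).
  by move=> eps /Hser [K HK]; exists K => n /HK Hn i j; rewrite !mxE.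
have H2 := cvg0_mulr (S *m (1%:M - Jt)) H1.
have H3 : cvg0 (fun _ => P - L *m (S *m (1%:M - Jt))).
  apply: cvg0_ext (cvg0_add H2 HP) => n.
  by rewrite mulmxBl Htel addrAC subrK.
have H4 := cvg0_const H3.
have H5 : L *m (1%:M - S *m Jt *m invmx S) = N0.
  move/eqP: H4; rewrite subr_eq0 => /eqP H4.
  by rewrite eU !mulmxA -(mulmxA L) -H4 /P -mulmxA mulmxV // mulmx1.
by rewrite -H5 mulmxK.
Qed.
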